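(* Let $G$ be a graph such that (i) $G[N[v]]$ is a unit interval graph for every $v\in V(G)$, and (ii) $G$ has no induced subgraph isomorphic to $C_4\cup K_1$. Let $X$ be the set of vertices $w_1\in V(G)$ for which there exist $w_2,\dots,w_6\in V(G)$ with $G[\{w_1,\dots,w_6\}]\cong\overline{C_6}$. Then $G[X]$ is co-bipartite.
   Context: A unit interval graph is an intersection graph of unit-length intervals on the real line. $C_n$ is the cycle of length $n$, $K_1$ a single vertex, $\cup$ denotes disjoint union, $\overline{H}$ the complement ($\overline{C_6}$ is the triangular prism). A graph is co-bipartite if its complement is bipartite. $N[v]$ is the closed neighborhood. *)

(* Defs.v *)
From Stdlib Require Import Reals.
From mathcomp Require Import all_boot.
Set Implicit Arguments.
Unset Strict Implicit.
Unset Printing Implicit Defensive.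

Definition simple_graph (T : finType) (e : rel T) : Prop :=
  symmetric e /\ irreflexive e.

Definition closed_nbhd (T : finType) (e : rel T) (v : T) : pred T :=
  fun x => (x == v) || e v x.

(* G[S] is a unit interval graph: each vertex x of S gets a unit interval
   [f x, f x + 1] of the real line, and two distinct vertices of S are adjacent
   iff their intervals intersect. *)
Definition unit_interval_on (T : finType) (e : rel T) (S : pred T) : Prop :=
  exists f : T -> R, forall x y, S x -> S y -> x <> y ->
    (e x y <-> Rle (Rabs (Rminus (f x) (f y))) R1).

Definition has_induced (T : finType) (e : rel T) (k : nat) (H : rel 'I_k) : Prop :=
  exists f : 'I_k -> T, injective f /\ forall i j, e (f i) (f j) = H i j.

(* C_4 ∪ K_1 on 'I_5: 0-1-2-3-0 is a 4-cycle, vertex 4 is isolated. *)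
Definition C4K1 : rel 'I_5 := fun i j =>
  (i < 4) && (j < 4) && ((j == (i + 1) %% 4 :> nat) || (i == (j + 1) %% 4 :> nat)).

(* The cycle C_6 on 'I_6 and its complement (the triangular prism). *)
Definition C6 : rel 'I_6 := fun i j =>
  (j == (i + 1) %% 6 :> nat) || (i == (j + 1) %% 6 :> nat).
Definition coC6 : rel 'I_6 := fun i j => (i != j) && ~~ C6 i j.

Definition in_prism (T : finType) (e : rel T) (w : T) : Prop :=
  exists f : 'I_6 -> T, [/\ injective f, forall i j, e (f i) (f j) = coC6 i j
                          & exists i, f i = w].

Definition cobipartite_on (T : finType) (e : rel T) (X : T -> Prop) : Prop :=
  exists c : T -> bool, forall x y, X x -> X y -> x <> y -> ~~ e x y -> c x <> c y.

(* Main.v *)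
Require Import Defs.
From Stdlib Require Import Reals Lra Classical.
From mathcomp Require Import all_boot.
Open Scope R_scope.
Lemma claw_R (u x y z : R) : Rabs(u-x)<=R1 -> Rabs(u-y)<=R1 -> Rabs(u-z)<=R1 -> R1<Rabs(x-y) -> R1<Rabs(x-z) -> R1<Rabs(y-z) -> False.
Proof. unfold Rabs; repeat destruct Rcase_abs; lra. Qed.
Lemma C4_R (p q r s : R) : Rabs(p-q)<=R1 -> Rabs(q-r)<=R1 -> Rabs(r-s)<=R1 -> Rabs(s-p)<=R1 -> R1<Rabs(p-r) -> R1<Rabs(q-s) -> False.
Proof. unfold Rabs; repeat destruct Rcase_abs; lra. Qed.
Close Scope R_scope.
Set Implicit Arguments. Unset Strict Implicit.

Definition Dfun (a0 a1 a2 b0 b1 b2 : bool) :=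
  [&& a0,a1,a2 & (b0+b1+b2 <= 1)%N] || [&& b0,b1,b2 & (a0+a1+a2<=1)%N].

Lemma boolmain (a0 a1 a2 b0 b1 b2 : bool) :
  a0||a1||b1||b0 -> a0||a2||b2||b0 -> a1||a2||b2||b1 ->
  ~~[&& a0,a1,b1&b0] -> ~~[&& a0,a2,b2&b0] -> ~~[&& a1,a2,b2&b1] ->
  a0 ==> b0 || a1 -> a0 ==> b0||a2 -> a1 ==> b1||a0 -> a1 ==> b1||a2 -> a2 ==> b2||a0 -> a2==>b2||a1 ->
  b0 ==> a0 || b1 -> b0 ==> a0||b2 -> b1 ==> a1||b0 -> b1 ==> a1||b2 -> b2 ==> a2||b0 -> b2==>a2||b1 ->
  Dfun a0 a1 a2 b0 b1 b2.
Proof. by case: a0; case: a1; case: a2; case: b0; case: b1; case: b2. Qed.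

Lemma boolfinal (x0 x1 x2 y0 y1 y2 u0 u1 u2 z0 z1 z2 : bool) :
  Dfun x0 x1 x2 u0 u1 u2 -> Dfun y0 y1 y2 z0 z1 z2 -> [&& x0, x1 & x2] = [&& y0, y1 & y2] ->
  [|| [&& x0, y0, ~~u0 & ~~z0], [&& x1, y1, ~~u1 & ~~z1], [&& x2, y2, ~~u2 & ~~z2],
      [&& u0, z0, ~~x0 & ~~y0], [&& u1, z1, ~~x1 & ~~y1] | [&& u2, z2, ~~x2 & ~~y2]].
Proof.
by case: x0; case: x1; case: x2; case: y0; case: y1; case: y2;
   case: u0; case: u1; case: u2; case: z0; case: z1; case: z2.
Qed.

Lemma edge_neq (T : finType) (e : rel T) : simple_graph e -> forall x y, e x y -> x <> y.
Proof. by case=> _ irr x y Exy Hxy; subst; rewrite irr in Exy. Qed.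

Lemma uiR (T : finType) (e : rel T) (S : pred T) (f : T -> R) :
  (forall x y, S x -> S y -> x <> y -> (e x y <-> Rle (Rabs (Rminus (f x) (f y))) R1)) ->
  forall x y, S x -> S y -> x <> y ->
   (e x y -> Rle (Rabs (Rminus (f x) (f y))) R1) /\ (~~ e x y -> Rlt R1 (Rabs (Rminus (f x) (f y)))).
Proof.
move=> H x y Sx Sy nxy; split; first by move/(H x y Sx Sy nxy).
move=> nE; apply: Rnot_le_lt => Hl; move/(H x y Sx Sy nxy): Hl => Hl.
by rewrite Hl in nE.
Qed.

Lemma no_claw (T : finType) (e : rel T) : simple_graph e ->
  (forall v : T, unit_interval_on e (closed_nbhd e v)) ->
  forall u x y z, e u x -> e u y -> e u z -> x <> y -> x <> z -> y <> z ->
   ~~ e x y -> ~~ e x z -> ~~ e y z -> False.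
Proof.
move=> hs hU u x y z ux uy uz nxy nxz nyz exy exz eyz.
case: (hU u) => f Hf.
have Su : closed_nbhd e u u by rewrite /closed_nbhd eqxx.
have Sx : closed_nbhd e u x by rewrite /closed_nbhd ux orbT.
have Sy : closed_nbhd e u y by rewrite /closed_nbhd uy orbT.
have Sz : closed_nbhd e u z by rewrite /closed_nbhd uz orbT.
have [h1 _] := uiR Hf Su Sx (edge_neq hs ux).
have [h2 _] := uiR Hf Su Sy (edge_neq hs uy).
have [h3 _] := uiR Hf Su Sz (edge_neq hs uz).
have [_ h4] := uiR Hf Sx Sy nxy.
have [_ h5] := uiR Hf Sx Sz nxz.
have [_ h6] := uiR Hf Sy Sz nyz.
exact: (@claw_R _ _ _ _ (h1 ux) (h2 uy) (h3 uz) (h4 exy) (h5 exz) (h6 eyz)).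
Qed.

Lemma no_C4 (T : finType) (e : rel T) : simple_graph e ->
  (forall v : T, unit_interval_on e (closed_nbhd e v)) ->
  forall v p q r s, e v p -> e v q -> e v r -> e v s ->
  e p q -> e q r -> e r s -> e s p -> ~~ e p r -> ~~ e q s -> p <> r -> q <> s -> False.
Proof.
move=> hs hU v p q r s vp vq vr vs pq qr rs sp pr qs npr nqs.
case: (hU v) => f Hf.
have Sp : closed_nbhd e v p by rewrite /closed_nbhd vp orbT.
have Sq : closed_nbhd e v q by rewrite /closed_nbhd vq orbT.
have Sr : closed_nbhd e v r by rewrite /closed_nbhd vr orbT.
have Ss : closed_nbhd e v s by rewrite /closed_nbhd vs orbT.
have [h1 _] := uiR Hf Sp Sq (edge_neq hs pq).
have [h2 _] := uiR Hf Sq Sr (edge_neq hs qr).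
have [h3 _] := uiR Hf Sr Ss (edge_neq hs rs).
have [h4 _] := uiR Hf Ss Sp (edge_neq hs sp).
have [_ h5] := uiR Hf Sp Sr npr.
have [_ h6] := uiR Hf Sq Ss nqs.
exact: (@C4_R _ _ _ _ (h1 pq) (h2 qr) (h3 rs) (h4 sp) (h5 pr) (h6 qs)).
Qed.

Lemma mkC4K1 (T : finType) (e : rel T) : simple_graph e ->
  forall p q r s w, e p q -> e q r -> e r s -> e s p -> ~~e p r -> ~~e q s -> p<>r -> q<>s ->
  ~~e w p -> ~~e w q -> ~~e w r -> ~~e w s -> w<>p -> w<>q -> w<>r -> w<>s -> has_induced e C4K1.
Proof.
move=> hs p q r s w pq qr rs sp pr qs npr nqs wp wq wr ws nwp nwq nwr nws.
have [sym irr] := hs.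
have npq := edge_neq hs pq; have nqr := edge_neq hs qr; have nrs := edge_neq hs rs;
have nsp := edge_neq hs sp.
exists (fun i : 'I_5 => nth w [:: p; q; r; s; w] i); split.
  move=> i j; case: i => [[|[|[|[|[|i]]]]] Hi] //; case: j => [[|[|[|[|[|j]]]]] Hj] //= H;
  try (by apply: val_inj); exfalso; congruence.
move: (negbTE pr) (negbTE qs) (negbTE wp) (negbTE wq) (negbTE wr) (negbTE ws) (irr p) (irr q) (irr r) (irr s) (irr w).
move=> pr' qs' wp' wq' wr' ws' ip iq ir is0 iw.
move=> i j; case: i => [[|[|[|[|[|i]]]]] Hi] //; case: j => [[|[|[|[|[|j]]]]] Hj] //=;
 rewrite /C4K1 /=;
 first [ by rewrite ?pq ?qr ?rs ?sp ?pr' ?qs' ?wp' ?wq' ?wr' ?ws' ?ip ?iq ?ir ?is0 ?iw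
       | by rewrite sym ?pq ?qr ?rs ?sp ?pr' ?qs' ?wp' ?wq' ?wr' ?ws' ?ip ?iq ?ir ?is0 ?iw ].
Qed.

Notation "''o' n" := (@Ordinal 6 n isT) (at level 0, n at level 0).

Definition ne (T : finType) (e : rel T) (v u : T) := (v == u) || e v u.

Unset Implicit Arguments.
Theorem mainTheorem16 (T : finType) (e : rel T) :
  simple_graph e ->
  (forall v : T, unit_interval_on e (closed_nbhd e v)) ->
  ~ has_induced e C4K1 ->
  cobipartite_on e (in_prism e).
Proof.
move=> hs hU hC.
have [sym irr] := hs.
case: (classic (exists g : 'I_6 -> T, injective g /\ forall i j, e (g i) (g j) = coC6 i j)); last first.
  move=> nP; exists (fun _ => true) => x y [g [gi ge _]]; exfalso; apply: nP; by exists g.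
case=> g [ginj ge].
have neP k m : ne e (g k) (g m) = (k == m) || coC6 k m by rewrite /ne (inj_eq ginj) ge.
pose D v := Dfun (ne e v (g 'o0)) (ne e v (g 'o2)) (ne e v (g 'o4))
                 (ne e v (g 'o3)) (ne e v (g 'o5)) (ne e v (g 'o1)).
have gneq i j : i != j -> g i <> g j by move=> nij /ginj Eij; rewrite Eij eqxx in nij.
have Dall v : D v.
  case: (pickP (fun k => v == g k)) => [k /eqP -> | nv].
    rewrite /D !neP; by case: k => [[|[|[|[|[|[|k]]]]]] Hk].
  have neE k : ne e v (g k) = e v (g k) by rewrite /ne nv.
  have vne k : v <> g k by move=> E; have := nv k; rewrite E eqxx.
  have C1L i j k l : coC6 i j -> coC6 j k -> coC6 k l -> coC6 l i -> ~~ coC6 i k -> ~~ coC6 j l ->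
      i != k -> j != l -> e v (g i) || e v (g j) || e v (g k) || e v (g l).
    move=> ij jk kl li ik jl nik njl.
    case Ei: (e v (g i)) => //; case Ej: (e v (g j)) => //; case Ek: (e v (g k)) => //;
    case El: (e v (g l)) => //=.
    exfalso; apply: hC; apply: (mkC4K1 hs (p:=g i) (q:=g j) (r:=g k) (s:=g l) (w:=v));
      rewrite ?ge ?Ei ?Ej ?Ek ?El //; by apply: gneq.
  have C1U i j k l : coC6 i j -> coC6 j k -> coC6 k l -> coC6 l i -> ~~ coC6 i k -> ~~ coC6 j l ->
      i != k -> j != l -> ~~ [&& e v (g i), e v (g j), e v (g k) & e v (g l)].
    move=> ij jk kl li ik jl nik njl; apply/negP => /and4P [Ei Ej Ek El].
    apply: (no_C4 hs hU Ei Ej Ek El); rewrite ?ge //; by apply: gneq.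
  have C2 i j k : coC6 i j -> coC6 i k -> ~~ coC6 j k -> j != k -> e v (g i) ==> e v (g j) || e v (g k).
    move=> ij ik jk njk; apply/implyP => Ei.
    case Ej: (e v (g j)) => //; case Ek: (e v (g k)) => //=.
    exfalso; apply: (no_claw hs hU (u:=g i) (x:=v) (y:=g j) (z:=g k)); rewrite ?ge ?Ej ?Ek //.
    all: try first [ by rewrite sym | by move=> E; apply: (vne j); rewrite E | by apply: vne | by apply: gneq ].
  rewrite /D !neE; apply: boolmain;
   first [ by apply: C1L | by apply: C1U | by apply: C2 ].
exists (fun v => [&& ne e v (g 'o0), ne e v (g 'o2) & ne e v (g 'o4)]) => x y _ _ nxy exy cxy.
have := boolfinal (Dall x) (Dall y) cxy.
have claw i j : coC6 i j -> ne e x (g i) -> ne e y (g i) -> ~~ ne e x (g j) -> ~~ ne e y (g j) -> False.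
  move=> ij xi yi xj yj.
  have nxj : x <> g j by move=> E; rewrite E /ne eqxx in xj.
  have nyj : y <> g j by move=> E; rewrite E /ne eqxx in yj.
  have exj : ~~ e x (g j) by move: xj; rewrite /ne negb_or => /andP [].
  have eyj : ~~ e y (g j) by move: yj; rewrite /ne negb_or => /andP [].
  have exi : e (g i) x.
    move: xi; rewrite /ne; case: eqP => [E _| _ /= H]; last by rewrite sym.
    by move: xj; rewrite E neP ij orbT.
  have eyi : e (g i) y.
    move: yi; rewrite /ne; case: eqP => [E _| _ /= H]; last by rewrite sym.
    by move: yj; rewrite E neP ij orbT.
  apply: (no_claw hs hU exi eyi (z := g j)); rewrite ?ge //.
case/orP => [H|/orP[H|/orP[H|/orP[H|/orP[H|H]]]]]; case/and4P: H => h1 h2 h3 h4;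
  by apply: (claw _ _ _ h1 h2 h3 h4).
Qed.
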